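(* Let $K$ be a field with algebraic closure $\overline{K}$, let $U=\{u_1,\dots,u_d\}$ be parameters and $X=\{x_1,\dots,x_n\}$ variables with $u_1\prec\dots\prec u_d\prec x_1\prec\dots\prec x_n$. Let $\mathbf{P}_1$ be a parametric system in $K[U][X]$ and let $\mathbb{S}=\{\mathbf{C}_1,\dots,\mathbf{C}_m\}$ be a Wu's decomposition of $\mathbf{P}_1$ in $K[U][X]$. Let $\mathcal{L}=\{\mathbf{C}_{l,1},\dots,\mathbf{C}_{l,k}\}\subseteq\mathbb{S}$ be a line of $\mathbb{S}$ with corresponding systems $\{\mathbf{P}_1,\dots,\mathbf{P}_k\}$. Then for every $a\in\overline{K}^d\setminus \mathrm{V}^U(\mathbf{C}_{l,k})$ and every $i$ with $1\le i\le k$, there exists a polynomial $p_i\in\mathbf{P}_i$ such that $p_i(a)$ is not the zero polynomial of $\overline{K}[X]$.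
   Context: A polynomial system is a non-empty finite subset of $K[U][X]$; it is a parametric system if it is contained in $K[U][X]\setminus K[X]$. For $F\in K[U][X]\setminus\{0\}$, its class $\mathrm{cls}(F)$ is the largest $p$ with $\deg(F,x_p)>0$ (and $0$ if no $x_i$ occurs); if $\mathrm{cls}(F)=p>0$, the main variable is $x_p$, and writing $F=C_0x_p^m+\dots+C_m$ with $C_0\ne0$, the initial is $\mathrm{I}(F)=C_0$ and the rank is $x_p^m$. A triangular set is a finite set $\{T_1,\dots,T_r\}\subset K[U][X]$ with $0<\mathrm{cls}(T_1)<\dots<\mathrm{cls}(T_r)$; $\mathrm{I}(\mathbf{T})=\prod_i \mathrm{I}(T_i)$. $F$ is reduced w.r.t. $\mathbf{T}$ if $\deg(F,\mathrm{mvar}(T_i))<\deg(T_i,\mathrm{mvar}(T_i))$ for all $i$. A non-contradictory ascending chain is a triangular set with each $T_i$ reduced w.r.t. $\{T_1,\dots,T_{i-1}\}$; a contradictory ascending chain is a set $\{F\}$ with $F\in K[U]$, $F\ne0$; an ascending chain is either. For a triangular set $\mathbf{T}=\{T_1,\dots,T_r\}$, $\mathrm{prem}(F,\mathbf{T})=\mathrm{prem}(\dots\mathrm{prem}(\mathrm{prem}(F,T_r),T_{r-1})\dots,T_1)$ (successive pseudo-remainders with respect to the main variables). An ascending chain $\mathbf{C}$ is a characteristic set of $\mathbf{P}$ if $\mathbf{C}\subset\langle\mathbf{P}\rangle_{K[U][X]}$ and $\mathrm{prem}(P,\mathbf{C})=0$ for all $P\in\mathbf{P}$. A Wu's decomposition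 of $\mathbf{P}$ is the finite set of ascending chains produced by Wu's method: compute a characteristic set $\mathbf{C}$ of $\mathbf{P}$ (contradictory or not); if $\mathbf{C}=\{C_1,\dots,C_t\}$ is non-contradictory, recursively apply the method to each system $\mathbf{P}\cup\mathbf{C}\cup\{\mathrm{I}(C_i)\}$; all characteristic sets so obtained form the decomposition. A subset $\mathcal{L}=\{\mathbf{C}_{l,1},\dots,\mathbf{C}_{l,k}\}$ of a Wu's decomposition $\mathbb{S}$ of $\mathbf{P}_1$ is a line, with corresponding systems $\mathbf{P}_1,\dots,\mathbf{P}_k$, if: (1) $\mathbf{C}_{l,1}$ is a characteristic set of $\mathbf{P}_1$; (2) if $k\ge2$, for each $2\le i\le k$, $\mathbf{C}_{l,i}$ is a characteristic set of $\mathbf{P}_i=\mathbf{P}_{i-1}\cup\mathbf{C}_{l,i-1}\cup\{\mathrm{I}(C_{l,i-1})\}$ for some $C_{l,i-1}\in\mathbf{C}_{l,i-1}$; (3) if $k=1$, $\mathbf{C}_{l,1}$ is contradictory; otherwise $\mathbf{C}_{l,1},\dots,\mathbf{C}_{l,k-1}$ are non-contradictory and $\mathbf{C}_{l,k}$ is contradictory. For $a\in\overline{K}^d$ and $F\in K[U][X]$, $F(a)\in\overline{K}[X]$ denotes the substitution $U\mapsto a$. For $\mathbf{B}\subset K[U]$, $\mathrm{V}^U(\mathbf{B})=\{a\in\overline{K}^d: B(a)=0\ \forall B\in\mathbf{B}\}$. *)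

(* Defs.v *)
From HB Require Import structures.
From mathcomp Require Import all_boot all_order all_algebra.
From mathcomp Require Import mpoly.
Set Implicit Arguments. Unset Strict Implicit. Unset Printing Implicit Defensive.
Import Order.TTheory GRing.Theory.
Local Open Scope ring_scope.

(* K[U][X] is represented as {mpoly {mpoly K[d]}[n]} : polynomials in the n
   variables X = x_1..x_n (indexed by 'I_n, x_{j+1} <-> 'X_j) with
   coefficients in K[U] = {mpoly K[d]} (u_1..u_d <-> 'I_d).  The ordering
   u_1 < ... < u_d < x_1 < ... < x_n is built into this representation:
   the class only looks at the X-variables.  Finite sets of polynomials are
   represented by sequences (membership = \in, union = concatenation). *)

Section Wu.
Variables (K : fieldType) (d n : nat).
Local Notation KU := {mpoly K[d]}.
Local Notation A := {mpoly KU[n]}.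

Definition degX (j : 'I_n) (F : A) : nat := (\max_(m <- msupp F) m j)%N.

Definition mvar (F : A) : option 'I_n :=
  [pick j : 'I_n | (0 < degX j F)%N &&
                   [forall j' : 'I_n, (j < j')%N ==> (degX j' F == 0%N)]].

Definition cls (F : A) : nat := if mvar F is Some j then j.+1 else 0%N.

(* F as a univariate polynomial in x_j with coefficients in K[U][X]
   (the coefficients do not involve x_j) *)
Definition mset0 (j : 'I_n) (m : 'X_{1..n}) : 'X_{1..n} :=
  [multinom (if i == j then 0%N else m i) | i < n].

Definition uni (j : 'I_n) (F : A) : {poly A} :=
  \sum_(m <- msupp F) (F@_m *: 'X_[mset0 j m])%:P * 'X^(m j).

Definition fromuni (j : 'I_n) (q : {poly A}) : A := q.['X_j].

(* initial: leading coefficient w.r.t. the main variable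
   (only meaningful when cls F > 0; set to F otherwise) *)
Definition init (F : A) : A :=
  if mvar F is Some j then lead_coef (uni j F) else F.

(* Classical pseudo-remainder of univariate polynomials over the domain A:
   the unique r with deg r < deg g and lc(g)^s f = q g + r,
   s = max(deg f - deg g + 1, 0), computed by the textbook loop. *)
Fixpoint prem_loop (g r : {poly A}) (k : nat) : {poly A} :=
  if k is k'.+1 then
    let i := ((size g).-1 + k')%N in
    prem_loop g (lead_coef g *: r - r`_i *: ('X^k' * g)) k'
  else r.

Definition prem_poly (f g : {poly A}) : {poly A} :=
  prem_loop g f (if (size g <= size f)%N then (size f - size g).+1 else 0%N).

(* prem(F, G) with respect to the main variable of G; for G of class 0
   (an element of K[U]), pseudo-division leaves remainder 0. *)
Definition prem1 (F G : A) : A :=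
  if mvar G is Some j then fromuni j (prem_poly (uni j F) (uni j G)) else 0.

Definition premT (F : A) (T : seq A) : A := foldr (fun G acc => prem1 acc G) F T.

Definition triangular (T : seq A) : bool :=
  all (fun G => (0 < cls G)%N) T && sorted (fun p q => (cls p < cls q)%N) T.

Definition reduced (F : A) (T : seq A) : bool :=
  all (fun G => if mvar G is Some j then (degX j F < degX j G)%N else true) T.

Definition noncontra_chain (T : seq A) : bool :=
  triangular T &&
  all (fun i => reduced (nth 0 T i) (take i T)) (iota 0 (size T)).

Definition inKU (F : A) : bool := F == (F@_mnm0)%:MP.

Definition contra_chain (T : seq A) : bool :=
  if T is [:: F] then (F != 0) && inKU F else false.

Definition asc_chain (T : seq A) : bool := noncontra_chain T || contra_chain T.

Definition in_ideal (P : seq A) (f : A) : Prop :=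
  exists cs : seq A, f = \sum_(i < size P) cs`_i * P`_i.

Definition charset (P C : seq A) : Prop :=
  asc_chain C /\ (forall c, c \in C -> in_ideal P c) /\
  (forall p, p \in P -> premT p C = 0).

Definition inKX (F : A) : bool :=
  all (fun m => F@_m == (F@_m@_mnm0)%:MP) (msupp F).

Definition parametric (P : seq A) : bool :=
  (P != [::]) && all (fun F => ~~ inKX F) P.

Inductive wu_dec : seq A -> seq (seq A) -> Prop :=
| WuContra (P C : seq A) :
    charset P C -> contra_chain C -> wu_dec P [:: C]
| WuStep (P C : seq A) (Ss : seq (seq (seq A))) :
    charset P C -> noncontra_chain C -> size Ss = size C ->
    (forall i, (i < size C)%N ->
       wu_dec (P ++ C ++ [:: init (nth 0 C i)]) (nth [::] Ss i)) ->
    wu_dec P (C :: flatten Ss).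

(* Lc = [C_{l,1};..;C_{l,k}] is a line of S with systems Ps = [P_1;..;P_k] *)
Definition is_line (P1 : seq A) (S Lc Ps : seq (seq A)) : Prop :=
  let k := size Lc in
  [/\ (0 < k)%N, size Ps = k, {subset Lc <= S} & nth [::] Ps 0 = P1] /\
  [/\
(forall i, (i < k)%N -> charset (nth [::] Ps i) (nth [::] Lc i)),
      (forall i, (0 < i < k)%N ->
         exists2 C, C \in nth [::] Lc i.-1 &
           nth [::] Ps i = nth [::] Ps i.-1 ++ nth [::] Lc i.-1 ++ [:: init C]),
      (forall i, (i.+1 < k)%N -> noncontra_chain (nth [::] Lc i)) &
      contra_chain (nth [::] Lc k.-1)].

Variables (L : fieldType) (iota : {rmorphism K -> L}).

Definition evalU (a : 'I_d -> L) (c : KU) : L := (map_mpoly iota c).@[a].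

Definition spec (a : 'I_d -> L) (F : A) : {mpoly L[n]} := map_mpoly (evalU a) F.

Definition inVU (B : seq KU) (a : 'I_d -> L) : bool :=
  all (fun c => evalU a c == 0) B.

End Wu.

(* Main.v *)
Require Import Defs.
From HB Require Import structures.
From mathcomp Require Import all_boot all_order all_algebra.
From mathcomp Require Import mpoly.
Import GRing.Theory.
Local Open Scope ring_scope.

Section Aux.
Variables (K : fieldType) (L : closedFieldType) (iota : {rmorphism K -> L}) (d n : nat).
Variable (a : 'I_d -> L).

Definition ev : {rmorphism {mpoly K[d]} -> L} := (meval a \o map_mpoly iota)%FUN.
Lemma evE c : evalU iota a c = ev c. Proof. by []. Qed.
Lemma specE F : spec iota a F = map_mpoly ev F :> {mpoly L[n]}. Proof. by []. Qed.

Lemma spec_ideal (P : seq {mpoly {mpoly K[d]}[n]}) f :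
  in_ideal P f -> (forall p, p \in P -> spec iota a p = 0) -> spec iota a f = 0.
Proof.
move=> [cs ->] H; rewrite specE rmorph_sum big1 // => i _.
rewrite rmorphM [X in _ * X](_ : _ = 0) ?mulr0 //; exact: (H _ (mem_nth 0 (ltn_ord i))).
Qed.

Lemma spec_init (C : {mpoly {mpoly K[d]}[n]}) :
  spec iota a C = 0 -> spec iota a (init C) = 0.
Proof.
move=> HC; rewrite /init; case: (mvar C) => [j|//].
rewrite /lead_coef /uni coef_sum specE rmorph_sum big1 // => m _.
rewrite coefMXn; case: ifP => _; first exact: rmorph0.
rewrite coefC; case: ifP => _; last exact: rmorph0.
have H0 : ev C@_m = 0.
  by rewrite -(mcoeff_map_mpoly ev) -specE HC mcoeff0.
rewrite -mul_mpolyC rmorphM /= map_mpolyC.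
by rewrite [X in X%:MP_[n] * _](_ : _ = 0) ?mpolyC0 ?mul0r.
Qed.
End Aux.
Arguments spec_ideal {K L iota d n a P f}.
Arguments spec_init {K L iota d n a C}.
Arguments ev {K L iota d} a.

Theorem lemma1 (K : fieldType) (L : closedFieldType) (iota : {rmorphism K -> L})
  (L_algebraic : forall x : L, exists2 p : {poly K}, p != 0 & root (map_poly iota p) x)
  (d n : nat) (P1 : seq {mpoly {mpoly K[d]}[n]})
  (S Lc Ps : seq (seq {mpoly {mpoly K[d]}[n]})) :
  parametric P1 -> wu_dec P1 S -> is_line P1 S Lc Ps ->
  forall a : 'I_d -> L,
    ~~ inVU iota [seq F@_mnm0 | F <- nth [::] Lc (size Lc).-1] a ->
    forall i, (i < size Lc)%N ->
      exists2 p, p \in nth [::] Ps i & spec iota a p != 0.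
Proof.
move=> _ _ [[k0 szPs _ _] [Hcs Hstep _ Hcontra]] a Ha i ilt.
case: (boolP (has (fun p => spec iota a p != 0) (nth [::] Ps i))).
  by move/hasP=> [p pin pn]; exists p.
move/hasPn=> H0; exfalso.
have H : forall t, (i + t < size Lc)%N ->
    forall p, p \in nth [::] Ps (i + t) -> spec iota a p = 0.
  elim=> [|t IH] ht.
    by move=> p pin; rewrite addn0 in pin; apply/eqP; have := H0 p pin; rewrite negbK.
  have ht' : (i + t < size Lc)%N by rewrite addnS in ht; exact: ltnW.
  have [C Cin ->] := Hstep (i + t.+1)%N ltac:(by rewrite ht andbT addnS).
  rewrite addnS /=.
  have HL : forall c, c \in nth [::] Lc (i + t) -> spec iota a c = 0.
    move=> c cin; have [_ [Hid _]] := Hcs _ ht'.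
    exact: (spec_ideal (Hid c cin) (IH ht')).
  move=> p; rewrite !mem_cat mem_seq1 => /orP [pin|/orP [pin|/eqP ->]].
  - exact: IH.
  - exact: HL.
  - rewrite addnS in Cin; exact: spec_init (HL _ Cin).
have ek : (i + ((size Lc).-1 - i) = (size Lc).-1)%N.
  by rewrite subnKC // -ltnS prednK.
have hk : (i + ((size Lc).-1 - i) < size Lc)%N by rewrite ek prednK.
have := H _ hk; rewrite ek => Hk.
have hk' : ((size Lc).-1 < size Lc)%N by rewrite prednK.
have [_ [Hid _]] := Hcs _ hk'.
move: Ha Hid (Hcontra).
case: (nth [::] Lc (size Lc).-1) => [|F [|//]] //= Ha Hid _.
have HF := spec_ideal (Hid F (mem_head _ _)) Hk.
have E : evalU iota a F@_mnm0 = 0.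
  rewrite evE -(mcoeff_map_mpoly (ev a)).
  by rewrite (_ : map_mpoly (ev a) F = 0) ?mcoeff0 //; exact: HF.
by move: Ha; rewrite /inVU /= E eqxx.
Qed.
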